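(* Let $X_1,\dots,X_n$ be mutually independent random variables with given distributions on ranges $D_1,\dots,D_n$ and product distribution $\mu$, and let $A_1,\dots,A_m$ be arbitrary events, $A_i$ determined by the variables indexed by $\mathrm{vbl}(A_i)\subseteq[n]$. Run the General Partial Rejection Sampling algorithm: draw all variables independently; while at least one $A_i$ occurs under the current assignment $\sigma$, compute $\mathrm{Res}(\sigma)$ and independently resample all variables in $\bigcup_{i\in\mathrm{Res}(\sigma)}\mathrm{vbl}(A_i)$; when no $A_i$ occurs, output the current assignment. If the algorithm halts, its output is distributed as $\mu$ conditioned on $\bigwedge_{i=1}^m\overline{A_i}$.
   Context: Dependency graph $G$ on $[m]$: distinct $i,j$ adjacent iff $\mathrm{vbl}(A_i)\cap\mathrm{vbl}(A_j)\neq\emptyset$. Notation: $\mathrm{Bad}(\sigma)=\{i:\sigma\in A_i\}$; $\partial S=\{i\notin S: i\text{ adjacent to some }j\in S\}$; $\mathrm{vbl}(S)=\bigcup_{i\in S}\mathrm{vbl}(A_i)$. We write $A_i\cap\sigma_S=\emptyset$ if either $\mathrm{vbl}(A_i)\cap\mathrm{vbl}(S)=\emptyset$ or no assignment agreeing with $\sigma$ on $\mathrm{vbl}(A_i)\cap\mathrm{vbl}(S)$ belongs to $A_i$; otherwise $A_i\cap\sigma_S\ne\emptyset$. $\mathrm{Res}(\sigma)$ is the output of: start with $R=\mathrm{Bad}(\sigma)$, $N=\emptyset$; while $\partial R\setminus N\neq\emptyset$, for each $i\in\partial R\setminus N$ (with $R$ the current set) put $i$ into $R$ if $A_i\cap\sigma_R\ne\emptyset$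 and into $N$ otherwise; output $R$. *)

(* Defs.v *)
From mathcomp Require Import all_boot all_order all_algebra.
Unset Printing Implicit Defensive.
Import Order.TTheory GRing.Theory Num.Theory.
Local Open Scope ring_scope.

Section PRS.
Variables (R : realFieldType) (n m : nat) (D : 'I_n -> finType).

Definition assignment := {dffun forall k : 'I_n, D k}.

Variables (p : forall k : 'I_n, D k -> R)
          (A : 'I_m -> {set assignment}) (vbl : 'I_m -> {set 'I_n}).

Definition mu (s : assignment) : R := \prod_(k < n) p k (s k).

Definition adj (i j : 'I_m) : bool := (i != j) && (vbl i :&: vbl j != set0).

Definition Bad (s : assignment) : {set 'I_m} := [set i | s \in A i].

Definition bdry (S : {set 'I_m}) : {set 'I_m} :=
  [set i | (i \notin S) && [exists j in S, adj i j]].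

Definition vblS (S : {set 'I_m}) : {set 'I_n} := \bigcup_(i in S) vbl i.

Definition agree_on (V : {set 'I_n}) (s t : assignment) : bool :=
  [forall k in V, s k == t k].

Definition meets (s : assignment) (i : 'I_m) (S : {set 'I_m}) : bool :=
  (vbl i :&: vblS S != set0) &&
  [exists t, (t \in A i) && agree_on (vbl i :&: vblS S) s t].

(* one pass of the inner for-loop: the elements of bdry R :\: N are processed
   in increasing index order, R and N being updated as we go *)
Definition res_step (s : assignment) (RN : {set 'I_m} * {set 'I_m}) (i : 'I_m) :=
  if meets s i RN.1 then (i |: RN.1, RN.2) else (RN.1, i |: RN.2).

Definition res_round (s : assignment) (RN : {set 'I_m} * {set 'I_m}) :=
  if bdry RN.1 :\: RN.2 != set0
  then foldl (res_step s) RN (enum (bdry RN.1 :\: RN.2))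
  else RN.

(* each nontrivial round enlarges R :|: N, so m.+1 rounds reach the fixpoint
   where the while-loop exits *)
Definition Res (s : assignment) : {set 'I_m} :=
  (iter m.+1 (res_round s) (Bad s, set0)).1.

(* one step of the algorithm: if some A_i occurs, resample vbl(Res s);
   otherwise stop (the state is absorbing) *)
Definition kernel (s t : assignment) : R :=
  if Bad s == set0 then (s == t)%:R
  else let V := vblS (Res s) in
       (agree_on (~: V) s t)%:R * \prod_(k in V) p k (t k).

Fixpoint state_dist (t : nat) : assignment -> R :=
  match t with
  | 0 => mu
  | t'.+1 => fun y => \sum_x state_dist t' x * kernel x y
  end.

Definition good (s : assignment) : bool := Bad s == set0.

End PRS.

(* Main.v *)
Require Import Defs.
From mathcomp Require Import all_boot all_order all_algebra.
From mathcomp Require Import ring.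
Import Order.TTheory GRing.Theory Num.Theory.
Unset Printing Implicit Defensive.

Section Proof.
Variables (R : realFieldType) (n m : nat) (D : 'I_n -> finType).
Variables (p : forall k : 'I_n, D k -> R)
          (A : 'I_m -> {set assignment n D}) (vbl : 'I_m -> {set 'I_n}).

Local Notation asg := (assignment n D).
Local Notation BadS := (Defs.Bad n m D A).
Local Notation ResS := (Defs.Res n m D A vbl).
Local Notation bdryS := (Defs.bdry n m vbl).
Local Notation vblSS := (Defs.vblS n m vbl).
Local Notation meetsS := (Defs.meets n m D A vbl).
Local Notation stepS := (Defs.res_step n m D A vbl).
Local Notation roundS := (Defs.res_round n m D A vbl).

Lemma vblS_mono (S1 S2 : {set 'I_m}) : S1 \subset S2 -> vblSS S1 \subset vblSS S2.
Proof.
move=> sub; apply/subsetP => k /bigcupP [j jS kj].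
apply/bigcupP; exists j => //; exact: (subsetP sub).
Qed.

Lemma step_mono s (RN : {set 'I_m} * {set 'I_m}) (i : 'I_m) : (RN.1 \subset (stepS s RN i).1) && (RN.2 \subset (stepS s RN i).2).
Proof.
rewrite /res_step; case: (meets _ _ _ _ _ _ _ _) => /=;
by rewrite ?subsetUr ?subxx.
Qed.

Lemma foldl_mono s (l : seq 'I_m) (RN : {set 'I_m} * {set 'I_m}) :
  (RN.1 \subset (foldl (stepS s) RN l).1) && (RN.2 \subset (foldl (stepS s) RN l).2).
Proof.
elim: l RN => [|i l IH] RN /=; first by rewrite !subxx.
case/andP: (step_mono s RN i) => h1 h2; case/andP: (IH (stepS s RN i)) => h3 h4.
by rewrite (subset_trans h1 h3) (subset_trans h2 h4).
Qed.

Lemma round_mono s (RN : {set 'I_m} * {set 'I_m}) :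
  (RN.1 \subset (roundS s RN).1) && (RN.2 \subset (roundS s RN).2).
Proof.
rewrite /res_round; case: ifP => _; [exact: foldl_mono | by rewrite !subxx].
Qed.

Lemma iter_mono s (x : {set 'I_m} * {set 'I_m}) k j :
  (iter k (roundS s) x).1 \subset (iter (j + k) (roundS s) x).1.
Proof.
elim: j => [|j IH]; first by rewrite subxx.
rewrite addSn iterS; apply: (subset_trans IH).
by case/andP: (round_mono s (iter (j + k) (roundS s) x)).
Qed.

Lemma Bad_sub_Res (s : asg) : BadS s \subset ResS s.
Proof.
have := iter_mono s (BadS s, set0) 0 m.+1; by rewrite addn0.
Qed.

Lemma meets_eq (s s' : asg) (i : 'I_m) (Rr S : {set 'I_m}) : Rr \subset S ->
  (forall k, k \in vblSS S -> s k = s' k) -> meetsS s i Rr = meetsS s' i Rr.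
Proof.
move=> sub eqs; rewrite /meets; congr (_ && _); apply: eq_existsb => t.
congr (_ && _); rewrite /agree_on; apply: eq_forallb => k.
case kin: (k \in _) => //=; rewrite eqs //.
move: kin; rewrite inE => /andP [_ kin]; exact: (subsetP (vblS_mono _ _ sub)).
Qed.

Lemma foldl_eq (s s' : asg) (S : {set 'I_m}) (l : seq 'I_m) (RN : {set 'I_m} * {set 'I_m}) : (foldl (stepS s) RN l).1 \subset S ->
  (forall k, k \in vblSS S -> s k = s' k) ->
  foldl (stepS s) RN l = foldl (stepS s') RN l.
Proof.
move=> + eqs; elim: l RN => [|i l IH] RN //= sub.
have h1 : (stepS s RN i).1 \subset S.
  by case/andP: (foldl_mono s l (stepS s RN i)) => h _; apply: subset_trans h sub.
have h0 : RN.1 \subset S by case/andP: (step_mono s RN i) => h _; apply: subset_trans h h1.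
have -> : stepS s RN i = stepS s' RN i.
  by rewrite /res_step (meets_eq _ _ i _ _ h0 eqs).
by rewrite -IH // /res_step -(meets_eq _ _ i _ _ h0 eqs).
Qed.

Lemma Res_eq (s s' : asg) : BadS s = BadS s' ->
  (forall k, k \in vblSS (ResS s) -> s k = s' k) -> ResS s' = ResS s.
Proof.
move=> eB eqs.
suff H : forall k, k <= m.+1 ->
  iter k (roundS s) (BadS s, set0) = iter k (roundS s') (BadS s', set0).
  by rewrite /Res -H.
elim=> [|k IH] km; first by rewrite eB.
rewrite !iterS -IH ?(ltnW km) //.
set RN := iter k (roundS s) _.
have sub : (roundS s RN).1 \subset ResS s.
  have := iter_mono s (BadS s, set0) k.+1 (m.+1 - k.+1); by rewrite subnK // iterS.
move: sub; rewrite /res_round; case: ifP => // _ sub; exact: (foldl_eq _ _ _ _ _ sub eqs).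
Qed.


Definition Inv (s : asg) (RN : {set 'I_m} * {set 'I_m}) :=
  forall i, i \in RN.2 -> forall z : asg,
    (forall k, k \in vblSS RN.1 -> s k = z k) -> z \notin A i.

Lemma step_inv s (R0 : {set 'I_m}) RN (i : 'I_m) : Inv s RN -> R0 \subset RN.1 ->
  i \in bdryS R0 -> Inv s (stepS s RN i).
Proof.
move=> inv sub ib; rewrite /res_step; case: ifP => mt j /=.
  move=> jN z agz; apply: (inv j jN) => k kv; apply: agz.
  by apply: (subsetP (vblS_mono _ _ (subsetUr [set i] RN.1))).
rewrite in_setU1 => /orP [/eqP -> | jN] z agz; last exact: inv j jN z agz.
move: mt; rewrite /meets.
have -> : vbl i :&: vblSS RN.1 != set0.
  move: ib; rewrite inE => /andP [_ /existsP [j' /andP [j'R /andP [_ ne]]]].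
  case/set0Pn: ne => k; rewrite inE => /andP [ki kj'].
  apply/set0Pn; exists k; rewrite inE ki /=.
  by apply/bigcupP; exists j' => //; apply: (subsetP sub).
move=> /= /negbT; rewrite negb_exists => /forallP /(_ z).
rewrite negb_and => /orP [//|/negP nag]; exfalso; apply: nag.
apply/forallP => k; apply/implyP; rewrite inE => /andP [_ kv].
by rewrite agz.
Qed.

Lemma foldl_inv s (R0 : {set 'I_m}) (l : seq 'I_m) RN : Inv s RN -> R0 \subset RN.1 ->
  all (fun i => i \in bdryS R0) l -> Inv s (foldl (stepS s) RN l).
Proof.
elim: l RN => [|i l IH] RN //= inv sub /andP [ib al].
apply: IH => //; first exact: (step_inv _ _ _ _ inv sub ib).
by case/andP: (step_mono s RN i) => h _; apply: subset_trans h.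
Qed.

Lemma round_inv s RN : Inv s RN -> Inv s (roundS s RN).
Proof.
move=> inv; rewrite /res_round; case: ifP => // _.
apply: (foldl_inv _ RN.1) => //.
by apply/allP => i; rewrite mem_enum inE => /andP [_].
Qed.

Lemma iter_inv s k : Inv s (iter k (roundS s) (BadS s, set0)).
Proof.
elim: k => [|k IH]; first by move=> i; rewrite inE.
by rewrite iterS; apply: round_inv.
Qed.

Lemma foldl_mem s (l : seq 'I_m) RN i : i \in l ->
  i \in (foldl (stepS s) RN l).1 :|: (foldl (stepS s) RN l).2.
Proof.
elim: l RN => [|j l IH] RN //=; rewrite inE => /orP [/eqP ->|il]; last exact: IH.
case/andP: (foldl_mono s l (stepS s RN j)) => h1 h2.
apply: (subsetP (setUSS h1 h2)).
by rewrite /res_step; case: ifP => _ /=; rewrite !inE eqxx ?orbT.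
Qed.

Definition triv (RN : {set 'I_m} * {set 'I_m}) := bdryS RN.1 :\: RN.2 == set0.

Lemma round_grow s RN : ~~ triv RN ->
  #|RN.1 :|: RN.2| < #|(roundS s RN).1 :|: (roundS s RN).2|.
Proof.
rewrite /triv /res_round => nt; rewrite nt.
apply: proper_card; apply/properP; split.
  by case/andP: (foldl_mono s (enum (bdryS RN.1 :\: RN.2)) RN) => h1 h2; apply: setUSS.
case/set0Pn: nt => i iD; exists i; first by apply: foldl_mem; rewrite mem_enum.
move: iD; rewrite !inE => /andP [iN /andP [iR _]].
by rewrite negb_or iR iN.
Qed.

Lemma iter_term s k : triv (iter k (roundS s) (BadS s, set0)) \/
  k <= #|(iter k (roundS s) (BadS s, set0)).1 :|: (iter k (roundS s) (BadS s, set0)).2|.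
Proof.
elim: k => [|k [IH|IH]]; first by right.
  by left; rewrite iterS /res_round; move: IH; rewrite /triv => /eqP e; rewrite e eqxx /= e.
rewrite iterS; case tr: (triv (iter k (roundS s) (BadS s, set0))).
  by left; rewrite /res_round; move: tr; rewrite /triv => /eqP e; rewrite e eqxx /= e.
by right; exact: leq_ltn_trans IH (round_grow s _ (negbT tr)).
Qed.

Lemma Res_triv s : triv (iter m.+1 (roundS s) (BadS s, set0)).
Proof.
case: (iter_term s m.+1) => // H; exfalso.
have := leq_trans H (max_card _); rewrite card_ord ltnn //.
Qed.

Lemma Res_N (s : asg) (i j : 'I_m) k : i \notin ResS s -> j \in ResS s ->
  k \in vbl i -> k \in vbl j -> forall z : asg,
  (forall k, k \in vblSS (ResS s) -> s k = z k) -> z \notin A i.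
Proof.
move=> iR jR ki kj z agz.
have := Res_triv s; have := iter_inv s m.+1; rewrite /triv /Res in iR jR agz *.
set RN := iter m.+1 _ _ => inv /eqP tr.
apply: (inv i) => //.
apply/negPn/negP => iN.
have : i \in bdryS RN.1 :\: RN.2.
  rewrite !inE iN iR /=; apply/existsP; exists j; rewrite jR /= /adj.
  have -> : i != j by apply/eqP => e; move: iR; rewrite e jR.
  by apply/set0Pn; exists k; rewrite inE ki kj.
by rewrite tr inE.
Qed.

Hypothesis A_det : forall (i : 'I_m) (s t : asg),
      (forall k, k \in vbl i -> s k = t k) -> (s \in A i) = (t \in A i).

Definition Cond (W : {set 'I_n}) (y y' : asg) : Prop :=
  (forall k, k \notin W -> y k = y' k) /\
  (forall i k, k \in vbl i -> k \in W -> (y \notin A i) && (y' \notin A i)).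

Lemma Cond_sym W y y' : Cond W y y' -> Cond W y' y.
Proof.
move=> [h1 h2]; split; first by move=> k kW; rewrite h1.
by move=> i k ki kW; rewrite andbC; apply: h2 ki kW.
Qed.

Lemma in_vblS (S : {set 'I_m}) i k : i \in S -> k \in vbl i -> k \in vblSS S.
Proof. by move=> iS ki; apply/bigcupP; exists i. Qed.

Lemma key W y y' (x : asg) S : Cond W y y' -> ResS x = S ->
  (forall k, k \notin vblSS S -> x k = y k) ->
  forall x' : asg, (forall k, x' k = if k \in vblSS S then x k else y' k) ->
  BadS x' = BadS x /\ ResS x' = S /\ Cond (W :\: vblSS S) x x'.
Proof.
move=> [cW cA] RS agy x' x'E.
have claimA : forall i, i \notin S -> (x \notin A i) && (x' \notin A i).
  move=> i iS.
  case: (boolP [exists k, (k \in vbl i) && (k \in vblSS S)]).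
    move/existsP => [k /andP [ki /bigcupP [j jS kj]]].
    rewrite -RS in iS jS.
    rewrite (Res_N x i j k iS jS ki kj x) //=.
    apply: (Res_N x i j k iS jS ki kj x') => k' k'V.
    by rewrite x'E -RS k'V.
  rewrite negb_exists => /forallP nk.
  have xA : x \notin A i.
    apply/negP => xA; move: iS; rewrite -RS => /negP; apply.
    by apply: (subsetP (Bad_sub_Res x)); rewrite inE.
  rewrite xA /=.
  case: (boolP [exists k, (k \in vbl i) && (k \in W)]).
    move/existsP => [k /andP [ki kW]]; case/andP: (cA i k ki kW) => _ y'A.
    rewrite (A_det i x' y') // => k' k'i.
    rewrite x'E; have := nk k'; rewrite k'i /= => /negbTE -> //.
  rewrite negb_exists => /forallP nkW.
  rewrite (A_det i x' x) // => k' k'i.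
  have := nk k'; rewrite k'i /= => /negbTE k'V.
  have := nkW k'; rewrite k'i /= => k'W.
  by rewrite x'E k'V agy ?k'V // cW.
have eB : BadS x' = BadS x.
  apply/setP => i; rewrite !inE.
  case iS: (i \in S).
    apply: A_det => k ki; rewrite x'E.
    by rewrite (in_vblS _ _ _ iS ki).
  by case/andP: (claimA i (negbT iS)) => /negbTE -> /negbTE ->.
have eR : ResS x' = S.
  rewrite -RS; apply: Res_eq; first by rewrite eB.
  by move=> k; rewrite RS x'E => ->.
split => //; split => //; split.
  move=> k; rewrite x'E inE negb_and negbK.
  case kV: (k \in vblSS S) => //= kW.
  by rewrite agy ?kV // cW.
move=> i k ki; rewrite inE => /andP [kV kW].
apply: claimA; apply/negP => iS.
by move: kV; rewrite (in_vblS _ _ _ iS ki).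
Qed.

Definition swap (V : {set 'I_n}) (y y' x : asg) : asg :=
  finfun (fun k => if k \in V then x k
                   else if x k == y k then y' k
                   else if x k == y' k then y k else x k).

Lemma swapK V y y' : cancel (swap V y y') (swap V y y').
Proof.
move=> x; apply/ffunP => k; rewrite !ffunE.
case: (k \in V) => //.
case: (eqVneq (x k) (y k)) => [->|ny].
  by case: (eqVneq (y' k) (y k)) => [->//|_]; rewrite eqxx.
case: (eqVneq (x k) (y' k)) => [e|ny'].
  by rewrite e in ny *; rewrite eqxx.
by rewrite (negbTE ny) (negbTE ny').
Qed.

Lemma swap_agree (V : {set 'I_n}) (y y' x : asg) : (forall k, k \notin V -> x k = y k) ->
  forall k, swap V y y' x k = if k \in V then x k else y' k.
Proof.
move=> ag k; rewrite ffunE; case kV: (k \in V) => //.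
by rewrite ag ?kV // eqxx.
Qed.

Lemma swap_agree_inv (V : {set 'I_n}) (y y' x : asg) :
  (forall k, k \notin V -> swap V y y' x k = y' k) ->
  forall k, k \notin V -> x k = y k.
Proof.
move=> ag k kV; have := ag k kV; rewrite ffunE (negbTE kV).
case: (eqVneq (x k) (y k)) => // ny.
case: (eqVneq (x k) (y' k)) => [-> -> //|ny' e].
by move: ny'; rewrite e eqxx.
Qed.

Local Open Scope ring_scope.

Definition muW (W : {set 'I_n}) (z : asg) : R := \prod_(k in W) p k (z k).
Local Notation nu := (state_dist R n m D p A vbl).

Lemma muW_eq (W : {set 'I_n}) (z z' : asg) : (forall k, k \in W -> z k = z' k) -> muW W z = muW W z'.
Proof. by move=> h; apply: eq_bigr => k kW; rewrite h. Qed.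

Lemma muW_split (W V : {set 'I_n}) (z : asg) : muW W z = muW (W :&: V) z * muW (W :\: V) z.
Proof. by rewrite /muW (big_setID V). Qed.

Lemma Bad_eq_Cond (W : {set 'I_n}) (y y' : asg) : Cond W y y' -> BadS y = BadS y'.
Proof.
move=> [cW cA]; apply/setP => i; rewrite !inE.
case: (boolP [exists k, (k \in vbl i) && (k \in W)]).
  by move/existsP => [k /andP [ki kW]]; case/andP: (cA i k ki kW) => /negbTE -> /negbTE ->.
rewrite negb_exists => /forallP nk; apply: A_det => k ki.
by apply: cW; have := nk k; rewrite ki.
Qed.

Lemma nu_step t (y : asg) : nu t.+1 y = (BadS y == set0)%:R * nu t y +
  \sum_(S : {set 'I_m}) \sum_(x | (BadS x != set0) && (ResS x == S))
     nu t x * ((agree_on n D (~: vblSS S) x y)%:R * muW (vblSS S) y).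
Proof.
rewrite /= (bigID (fun x => BadS x == set0)) /=; congr (_ + _).
  rewrite big_mkcond (bigD1 y) //= big1 => [|x nxy].
    rewrite addr0 /kernel; case: ifP => g; first by rewrite g eqxx mulr1 mul1r.
    by rewrite mul0r.
  by rewrite /kernel; case: ifP => // g; rewrite g (negbTE nxy) mulr0.
rewrite (partition_big ResS xpredT) //; apply: eq_bigr => S _.
apply: eq_bigr => x /andP [bx /eqP RS].
by rewrite /kernel (negbTE bx) /= RS.
Qed.

Lemma inv_t t : forall (W : {set 'I_n}) (y y' : asg), Cond W y y' -> nu t y * muW W y' = nu t y' * muW W y.
Proof.
elim: t => [|t IH] W y y' C.
  rewrite /= /mu /muW (bigID (fun k => k \in W)) /=.
  rewrite [X in _ = X * _](bigID (fun k => k \in W)) /=.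
  have -> : \prod_(k < n | k \notin W) p k (y' k) = \prod_(k < n | k \notin W) p k (y k).
    by apply: eq_bigr => k kW; rewrite C.1.
  ring.
rewrite !nu_step !mulrDl; congr (_ + _).
  by rewrite (Bad_eq_Cond _ _ _ C) -!mulrA IH.
rewrite !mulr_suml; apply: eq_bigr => S _.
set V := vblSS S.
rewrite !mulr_suml.
rewrite [RHS](reindex_inj (can_inj (swapK V y y'))) /=.
rewrite big_mkcond [RHS]big_mkcond /=.
apply: eq_bigr => x _.
case agx: (agree_on n D (~: V) x y); last first.
  have agx' : agree_on n D (~: V) (swap V y y' x) y' = false.
    apply/negbTE/negP => /forallP h; move: agx => /negbT/negP; apply.
    apply/forallP => k; apply/implyP => kV; apply/eqP.
    apply: (swap_agree_inv V y y' x) => [k' k'V|]; last by move: kV; rewrite inE.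
    by apply/eqP; have := h k'; rewrite inE k'V.
  have f0 : (false%:R : R) = 0 by rewrite mulr0n.
  by rewrite agx' f0 !(mul0r, mulr0) !if_same.
have ag : forall k, k \notin V -> x k = y k.
  by move/forallP: agx => h k kV; apply/eqP; have := h k; rewrite inE kV.
have sx := swap_agree V y y' x ag.
have agx' : agree_on n D (~: V) (swap V y y' x) y' = true.
  by apply/forallP => k; apply/implyP; rewrite inE => kV; rewrite sx (negbTE kV).
rewrite agx'.
have ec : (BadS x != set0) && (ResS x == S) =
          (BadS (swap V y y' x) != set0) && (ResS (swap V y y' x) == S).
  apply/idP/idP => /andP [bx /eqP RS].
    have [eB [eR _]] := key W y y' x S C RS ag (swap V y y' x) sx.
    by rewrite eB eR bx eqxx.
  have ag' : forall k, k \notin V -> swap V y y' x k = y' k.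
    by move=> k kV; rewrite sx (negbTE kV).
  have xE : forall k, x k = if k \in V then swap V y y' x k else y k.
    by move=> k; rewrite sx; case kV: (k \in V) => //; rewrite ag ?kV.
  have [eB [eR _]] := key W y' y (swap V y y' x) S (Cond_sym _ _ _ C) RS ag' x xE.
  by rewrite eB eR bx eqxx.
rewrite -ec; case: ifP => [/andP [_ /eqP RS]| _]; last by [].
have [_ [_ C']] := key W y y' x S C RS ag (swap V y y' x) sx.
have IH' := IH _ _ _ C'.
have t1 : (true%:R : R) = 1 by [].
rewrite t1 !mul1r.
rewrite (muW_split W V y') (muW_split W V y) (muW_split V W y) (muW_split V W y').
have e1 : muW (W :\: V) y' = muW (W :\: V) (swap V y y' x).
  by apply: muW_eq => k; rewrite inE sx => /andP [/negbTE -> _].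
have e2 : muW (W :\: V) y = muW (W :\: V) x.
  by apply: muW_eq => k; rewrite inE => /andP [kV _]; rewrite ag.
have e3 : muW (V :\: W) y' = muW (V :\: W) y.
  by apply: muW_eq => k; rewrite inE => /andP [kW _]; rewrite C.1.
rewrite e1 e2 e3 (setIC V W).
transitivity (nu t x * muW (W :\: V) (swap V y y' x) *
   (muW (W :&: V) y * muW (V :\: W) y * muW (W :&: V) y')); first by ring.
rewrite IH'; ring.
Qed.

Lemma supp t (y : asg) : Defs.mu R n D p y = 0 -> nu t y = 0.
Proof.
elim: t y => [|t IH] y mu0 //=.
have [k _ /eqP pk] : exists2 k, true & p k (y k) == 0.
  by apply/prodf_eq0; apply/eqP; exact: mu0.
have f0 : (false%:R : R) = 0 by rewrite mulr0n.
apply: big1 => x _; rewrite /kernel; case: ifP => g.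
  case: (eqVneq x y) => [->|ne]; first by rewrite IH // mul0r.
  by rewrite f0 mulr0.
rewrite /=; case kV: (k \in vblSS (ResS x)).
  by rewrite (bigD1 k) //= pk mul0r !mulr0.
case ag: (agree_on n D (~: vblSS (ResS x)) x y); last by rewrite f0 mul0r mulr0.
have xk : x k = y k.
  by move/forallP: ag => /(_ k); rewrite inE kV => /eqP.
rewrite IH ?mul0r //; apply/eqP/prodf_eq0; exists k => //.
by rewrite xk pk.
Qed.

Lemma final (p_ge0 : forall (k : 'I_n) (x : D k), 0 <= p k x) t (s : asg) :
  (if good n m D A s then nu t s else 0) =
    (\sum_(y | good n m D A y) nu t y) *
    ((if good n m D A s then Defs.mu R n D p s else 0)
       / \sum_(y | good n m D A y) Defs.mu R n D p y).
Proof.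
case gs: (good n m D A s); last by rewrite mul0r mulr0.
have muT : forall z, muW setT z = Defs.mu R n D p z.
  by move=> z; rewrite /muW /mu; apply: eq_bigl => k; rewrite in_setT.
have cross : forall y, good n m D A y ->
    nu t s * Defs.mu R n D p y = nu t y * Defs.mu R n D p s.
  move=> y gy; rewrite -!muT; apply: inv_t; split; first by move=> k; rewrite in_setT.
  move=> i k _ _; move: gs gy; rewrite /good => /eqP bs /eqP bys.
  apply/andP; split; apply/negP => h.
    have : i \in BadS s by rewrite inE.
    by rewrite bs inE.
  have : i \in BadS y by rewrite inE.
  by rewrite bys inE.
have key2 : nu t s * (\sum_(y | good n m D A y) Defs.mu R n D p y) =
            (\sum_(y | good n m D A y) nu t y) * Defs.mu R n D p s.
  by rewrite mulr_sumr mulr_suml; apply: eq_bigr => y gy; exact: cross.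
case: (eqVneq (\sum_(y | good n m D A y) Defs.mu R n D p y) 0) => [M0 | M0].
  have ms : Defs.mu R n D p s = 0.
    apply: (psumr_eq0P _ M0) => // y _.
    by apply: prodr_ge0 => k _; apply: p_ge0.
  by rewrite ms mul0r mulr0 (supp t s ms).
by apply: (mulIf M0); rewrite key2 -mulrA divfK.
Qed.

End Proof.

Local Open Scope ring_scope.

Theorem theorem26 (R : realFieldType) (n m : nat) (D : 'I_n -> finType)
  (p : forall k : 'I_n, D k -> R)
  (A : 'I_m -> {set assignment n D}) (vbl : 'I_m -> {set 'I_n})
  (p_ge0 : forall (k : 'I_n) (x : D k), 0 <= p k x)
  (p_sum1 : forall k : 'I_n, \sum_(x : D k) p k x = 1)
  (A_det : forall (i : 'I_m) (s t : assignment n D),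
      (forall k, k \in vbl i -> s k = t k) -> (s \in A i) = (t \in A i)) :
  forall (t : nat) (s : assignment n D),
    (if good n m D A s then state_dist R n m D p A vbl t s else 0) =
    (\sum_(y | good n m D A y) state_dist R n m D p A vbl t y) *
    ((if good n m D A s then mu R n D p s else 0)
       / \sum_(y | good n m D A y) mu R n D p y).
Proof.
move=> t s; exact: (final R n m D p A vbl A_det p_ge0 t s).
Qed.
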